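(* A finite graph $K$ is vertex-costly if and only if it is connected. Moreover, every finite connected graph $K$ without hanging edges is vertex-costly in the class of connected graphs.
   Context: ''Graph'' may be understood in any of the usual senses (directed, undirected, or mixed; multiple edges and/or loops allowed or not), fixed throughout; isomorphisms and automorphisms preserve the corresponding structure. ''Subgraph'' means an arbitrary (not necessarily induced) subgraph. For a finite graph $K$ and a graph $\Gamma$, the vertex representativeness $\Upsilon_v(K,\Gamma)$ is the minimal integer $n$ such that $\Gamma$ has a set $X$ of $n$ vertices with the property that every subgraph of $\Gamma$ isomorphic to $K$ contains a vertex of $X$; the symmetric vertex representativeness $\Upsilon_v^{\mathrm{sym}}(K,\Gamma)$ is the minimal $n$ such that such a set $X$ of $n$ vertices exists which is moreover invariant under $\mathrm{Aut}\,\Gamma$. A finite graph $K$ with $k$ vertices is vertex-costly if for every integer $m$ there exists a graph $\Gamma_m$ with $\Upsilon_v^{\mathrm{sym}}(K,\Gamma_m)=k\cdot\Upsilon_v(K,\Gamma_m)\ge m$; it is vertex-costly in a class of graphs $\mathcal{K}$ if the graphs $\Gamma_m$ can be chosen in $\mathcal{K}$. A hanging edge is an edge incident to a vertex of degree one. *)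

(* Defs.v *)
From mathcomp Require Import all_boot.
From Stdlib Require List.
From Stdlib Require Import Relation_Operators.

Set Implicit Arguments.
Unset Strict Implicit.
Unset Printing Implicit Defensive.

Definition is_graph (V : Type) (adj : V -> V -> Prop) : Prop :=
  (forall u v, adj u v -> adj v u) /\ (forall v, ~ adj v v).

Definition connected (V : Type) (adj : V -> V -> Prop) : Prop :=
  (exists v : V, True) /\ forall u v : V, clos_refl_trans V adj u v.

Definition iso_subgraph (T : finType) (e : rel T) (V : Type)
    (adj : V -> V -> Prop) (W : V -> Prop) (F : V -> V -> Prop) : Prop :=
  (forall u v, F u v -> [/\ adj u v, W u & W v]) /\
  (forall u v, F u v -> F v u) /\
  exists f : T -> V,
    [/\ injective f,
        (forall v, W v <-> exists x, f x = v) &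
        (forall x y, e x y <-> F (f x) (f y))].

Definition represents (T : finType) (e : rel T) (V : Type)
    (adj : V -> V -> Prop) (X : list V) : Prop :=
  forall W F, iso_subgraph e adj W F -> exists v, W v /\ List.In v X.

Definition automorphism (V : Type) (adj : V -> V -> Prop) (s : V -> V) : Prop :=
  bijective s /\ forall u v, adj u v <-> adj (s u) (s v).

Definition aut_invariant (V : Type) (adj : V -> V -> Prop) (X : list V) : Prop :=
  forall s, automorphism adj s -> forall v, List.In v X <-> List.In (s v) X.

Definition has_rep (T : finType) (e : rel T) (V : Type)
    (adj : V -> V -> Prop) (n : nat) : Prop :=
  exists X : list V, [/\ List.NoDup X, List.length X = n & represents e adj X].

Definition has_sym_rep (T : finType) (e : rel T) (V : Type)
    (adj : V -> V -> Prop) (n : nat) : Prop :=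
  exists X : list V,
    [/\ List.NoDup X, List.length X = n, represents e adj X & aut_invariant adj X].

Definition upsilon_v (T : finType) (e : rel T) (V : Type)
    (adj : V -> V -> Prop) (n : nat) : Prop :=
  has_rep e adj n /\ forall m, has_rep e adj m -> n <= m.

Definition upsilon_v_sym (T : finType) (e : rel T) (V : Type)
    (adj : V -> V -> Prop) (n : nat) : Prop :=
  has_sym_rep e adj n /\ forall m, has_sym_rep e adj m -> n <= m.

Definition vertex_costly_in
    (P : forall V : Type, (V -> V -> Prop) -> Prop)
    (T : finType) (e : rel T) : Prop :=
  forall m : nat, exists (V : Type) (adj : V -> V -> Prop) (u : nat),
    [/\ is_graph adj, P V adj, upsilon_v e adj u,
        upsilon_v_sym e adj (#|T| * u) & m <= #|T| * u].

Definition vertex_costly (T : finType) (e : rel T) : Prop :=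
  vertex_costly_in (fun V adj => True) e.

Definition degree (T : finType) (e : rel T) (x : T) : nat := #|[set y | e x y]|.

Definition no_hanging_edges (T : finType) (e : rel T) : Prop :=
  ~ exists x y, [/\ e x y & (degree e x = 1 \/ degree e y = 1)].

(* Main.v *)
Set Warnings "-notation-overridden,-redundant-canonical-projection".
From HB Require Import structures.
Require Import Defs.
From mathcomp Require Import all_boot all_fingroup boolp zify.
From Stdlib Require List.
From Stdlib Require Import Relation_Operators Operators_Properties.
Set Implicit Arguments.
Unset Strict Implicit.
Unset Printing Implicit Defensive.


Lemma InE (T : eqType) (x : T) s : List.In x s <-> x \in s.
Proof.
elim: s => [|y s IH] //=; rewrite in_cons; split.
- by case=> [->|/IH ->]; rewrite ?eqxx ?orbT.
- by case/orP=> [/eqP ->|/IH]; [left|right].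
Qed.

Lemma NoDupE (T : eqType) (s : seq T) : List.NoDup s <-> uniq s.
Proof.
elim: s => [|y s IH] /=; first by split=> // _; constructor.
split.
- move=> H; inversion H; subst; apply/andP; split; last by apply/IH.
  by apply/negP=> /InE.
- case/andP=> H1 H2; constructor; last by apply/IH.
  by move/InE; rewrite (negbTE H1).
Qed.

Lemma lengthE T (s : seq T) : List.length s = size s.
Proof. by elim: s => //= _ s ->. Qed.

Definition cl (V : Type) : Type := V.
HB.instance Definition _ (V : Type) := gen_eqMixin (cl V).
HB.instance Definition _ (V : Type) := gen_choiceMixin (cl V).

Lemma aut_copy (T : finType) (e : rel T) V (adj : V -> V -> Prop) s W F :
  automorphism adj s -> iso_subgraph e adj W F ->
  exists W' F', iso_subgraph e adj W' F' /\ forall v, W v -> W' (s v).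
Proof.
move=> [[g sg gs] Hs] [H1 [H2 [f [fi fW fe]]]].
exists (fun v => W (g v)), (fun u v => F (g u) (g v)); split; last by move=> v; rewrite sg.
split; [|split].
- move=> u v /H1 [a b c]; split => //; by rewrite -(gs u) -(gs v) -Hs.
- by move=> u v /H2.
- exists (fun x => s (f x)); split.
  + by move=> x y /(can_inj sg) /fi.
  + move=> v; rewrite fW; split=> [[x fx]|[x <-]]; exists x; last by rewrite sg.
    by rewrite fx gs.
  + by move=> x y; rewrite !sg.
Qed.

Lemma aut_inv V (adj : V -> V -> Prop) s :
  automorphism adj s -> exists g, automorphism adj g /\ cancel s g /\ cancel g s.
Proof.
move=> [[g sg gs] Hs]; exists g; split=> //; split; first by exists s.
by move=> u v; rewrite -{1}(gs u) -{1}(gs v) -Hs.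
Qed.

Section Frame.
Variables (T : finType) (e : rel T) (V : finType) (adj : V -> V -> Prop) (n : nat)
  (b : 'I_n -> T -> V) (x0 : T).
Hypothesis esym : forall x y, e x y -> e y x.
Hypothesis binj : forall i j x y, b i x = b j y -> i = j /\ x = y.
Hypothesis badj : forall i x y, e x y -> adj (b i x) (b i y).
Hypothesis bcopy : forall W F, iso_subgraph e adj W F ->
  exists i, forall v, W v <-> exists x, b i x = v.
Hypothesis baut : forall i x y, exists s, automorphism adj s /\ s (b i y) = b i x.

Lemma block_copy i : iso_subgraph e adj (fun v => exists x, b i x = v)
   (fun u v => exists x y, [/\ b i x = u, b i y = v & e x y]).
Proof.
split; [|split].
- move=> u v [x [y [<- <- exy]]]; split; [exact: badj| by exists x| by exists y].
- move=> u v [x [y [<- <- exy]]]; exists y, x; split => //; exact: esym.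
- exists (b i); split => //.
  + by move=> x y /binj [].
  + move=> x y; split; first by move=> exy; exists x, y.
    by move=> [x' [y' [/binj [_ ->] /binj [_ ->]]]].
Qed.

Definition X1 := [seq b i x0 | i <- enum 'I_n].
Definition X2 := [seq b p.1 p.2 | p <- enum {: 'I_n * T}].

Lemma X1_ok : [/\ List.NoDup X1, List.length X1 = n & represents e adj X1].
Proof.
split.
- apply/NoDupE; rewrite map_inj_uniq ?enum_uniq // => i j /binj []//.
- by rewrite lengthE size_map size_enum_ord.
- move=> W F /bcopy [i Hi]; exists (b i x0); split; first by apply/Hi; exists x0.
  by apply/InE; apply/mapP; exists i; rewrite ?mem_enum.
Qed.

Lemma X1_min X : represents e adj X -> n <= List.length X.
Proof.
move=> HX.
have H : forall i : 'I_n, exists x, b i x \in X.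
  move=> i; have [v [[x <-] /InE Hv]] := HX _ _ (block_copy i); by exists x.
have [g Hg] := fin_all_exists H.
rewrite lengthE -(size_enum_ord n) -(size_map (fun i => b i (g i))).
apply: uniq_leq_size.
- rewrite map_inj_uniq ?enum_uniq // => i j /binj []//.
- by move=> v /mapP [i _ ->].
Qed.

Lemma incopy_block v : (exists W F, iso_subgraph e adj W F /\ W v) <-> exists i x, b i x = v.
Proof.
split.
- move=> [W [F [/bcopy [i Hi] Wv]]]; exists i; exact/Hi.
- move=> [i [x <-]]; do 2 eexists; split; first exact: (block_copy i).
  by exists x.
Qed.

Lemma X2_ok : [/\ List.NoDup X2, List.length X2 = #|T| * n, represents e adj X2
   & aut_invariant adj X2].
Proof.
have memX2 : forall v, v \in X2 <-> exists i x, b i x = v.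
  move=> v; split; first by move=> /mapP [[i x] _ ->]; exists i, x.
  by move=> [i [x <-]]; apply/mapP; exists (i, x); rewrite ?mem_enum.
split.
- apply/NoDupE; rewrite map_inj_uniq ?enum_uniq //.
  by move=> [i x] [j y] /= /binj [-> ->].
- by rewrite lengthE size_map -cardE card_prod card_ord mulnC.
- move=> W F /bcopy [i Hi]; exists (b i x0); split; first by apply/Hi; exists x0.
  by apply/InE/memX2; exists i, x0.
- move=> s Hs v; rewrite !InE !memX2 -!incopy_block; split.
  + move=> [W [F [HW Wv]]]; have [W' [F' [H1 H2]]] := aut_copy Hs HW.
    by exists W', F'; split; [|exact: H2].
  + have [g [Hg [sg gs]]] := aut_inv Hs.
    move=> [W [F [HW Wv]]]; have [W' [F' [H1 H2]]] := aut_copy Hg HW.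
    by exists W', F'; split; [|rewrite -(sg v); exact: H2].
Qed.

Lemma X2_min X : represents e adj X -> aut_invariant adj X -> #|T| * n <= List.length X.
Proof.
move=> HX HI.
have H : forall i x, b i x \in X.
  move=> i x; have [v [[y <-] /InE Hv]] := HX _ _ (block_copy i).
  have [s [Hs <-]] := baut i x y; apply/InE; apply/(HI s Hs (b i y)); exact/InE.
have [_ <- _ _] := X2_ok.
rewrite !lengthE; apply: uniq_leq_size.
- by have [/NoDupE] := X2_ok.
- by move=> v /mapP [[i x] _ ->].
Qed.

Lemma frame : upsilon_v e adj n /\ upsilon_v_sym e adj (#|T| * n).
Proof.
split.
- split; first by exists X1; exact: X1_ok.
  by move=> m [X [_ <- HX]]; exact: X1_min.
- split; first by exists X2; exact: X2_ok.
  by move=> m [X [_ <- HX HI]]; exact: X2_min.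
Qed.
End Frame.

Lemma block_surj (T : finType) (V : Type) (f b' : T -> V) :
  injective f -> injective b' -> (forall z, exists y, f z = b' y) ->
  forall y, exists z, f z = b' y.
Proof.
move=> fi bi H; have [g Hg] := fin_all_exists H.
have gi : injective g by move=> u v guv; apply: fi; rewrite !Hg guv.
have [h gh hg] := injF_bij gi.
by move=> y; exists (h y); rewrite Hg hg.
Qed.

Definition swp (n : nat) (T : finType) (i : 'I_n) (x y : T) (j : 'I_n) (z : T) : T :=
  if j == i then tperm x y z else z.

Lemma swp_inv n T i x y j : involutive (@swp n T i x y j).
Proof. by move=> z; rewrite /swp; case: eqP => // _; rewrite tpermK. Qed.

Lemma swp_inj n T i x y j : injective (@swp n T i x y j).
Proof. exact: inv_inj (swp_inv _ _ _ _). Qed.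

Lemma swp_val n T i x y : @swp n T i x y i y = x.
Proof. by rewrite /swp eqxx tpermR. Qed.

Lemma crt_ind_f (T : Type) (r : T -> T -> Prop) (A : Type) (h : T -> A) :
  (forall a b, r a b -> h a = h b) -> forall a b, clos_refl_trans T r a b -> h a = h b.
Proof. by move=> H a b; elim=> [? ? /H //| //| ? ? ? _ -> _ ->]. Qed.

Section PartA.
Variables (T : finType) (e : rel T) (n : nat).
Hypothesis esymm : forall x y, e x y -> e y x.
Hypothesis eirr : forall x, ~ e x x.
Hypothesis econn : forall x y, clos_refl_trans T (fun a b => e a b) x y.

Notation VA := (prod (ordinal n) (Finite.sort T)) (only parsing).
Definition adjA (u v : VA) : Prop := u.1 = v.1 /\ u.2 <> v.2.

Lemma adjA_graph : is_graph adjA.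
Proof. split=> [u v [h1 h2]|v [_ h]] //; split=> // h; apply: h2; by rewrite h. Qed.

Lemma partA (x0 : T) : upsilon_v e adjA n /\ upsilon_v_sym e adjA (#|T| * n).
Proof.
apply: (@frame T e _ adjA n (fun i x => (i, x)) x0) => //.
- by move=> i j x y [-> ->].
- by move=> i x y exy; split => //= exy'; subst; exact: (eirr exy).
- move=> W F [H1 [H2 [f [fi fW fe]]]].
  have hf : forall x, (f x).1 = (f x0).1.
    move=> x; symmetry; apply: (@crt_ind_f _ _ _ (fun z => (f z).1)) (econn x0 x).
    by move=> a b /fe /H1 [[]].
  exists (f x0).1 => v; rewrite fW; split.
  + by move=> [z <-]; exists (f z).2; rewrite -(hf z); case: (f z).
  + move=> [x <-]; apply: (@block_surj T VA f (fun x => ((f x0).1, x))) => //.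
    * by move=> a b [].
    * by move=> z; exists (f z).2; rewrite -(hf z); case: (f z).
- move=> i x y; exists (fun v : VA => (v.1, swp i x y v.1 v.2)); split; last first.
    by rewrite /= swp_val.
  split.
  + by exists (fun v : VA => (v.1, swp i x y v.1 v.2)) => -[j z] /=; rewrite swp_inv.
  + move=> [j z] [j' z']; rewrite /adjA /=; split.
    * by move=> [<- h]; split => // /swp_inj.
    * by move=> [<- h]; split => // hz; apply: h; rewrite hz.
Qed.
End PartA.

Section PartB.
Variables (T : finType) (e : rel T) (n : nat).
Hypothesis esymm : forall x y, e x y -> e y x.
Hypothesis eirr : forall x, ~ e x x.
Hypothesis econn : forall x y, clos_refl_trans T (fun a b => e a b) x y.
Hypothesis edeg : forall x, exists y1 y2, [/\ y1 <> y2, e x y1 & e x y2].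

Definition k := #|T|.
Notation L := k.+2.
Notation VB := (option ('I_n * T * 'I_L)).

Definition adjB (u v : VB) : Prop :=
  match u, v with
  | None, None => False
  | None, Some p => val p.2 = k.+1
  | Some p, None => val p.2 = k.+1
  | Some p, Some p' => p.1.1 = p'.1.1 /\
      ((val p.2 = 0 /\ val p'.2 = 0 /\ p.1.2 <> p'.1.2) \/
       (p.1.2 = p'.1.2 /\ ((val p.2).+1 = val p'.2 \/ (val p'.2).+1 = val p.2)))
  end.

Lemma adjB_graph : is_graph adjB.
Proof.
split.
- move=> [[[i z] j]|] [[[i' z'] j']|] //=.
  move=> [-> [[h1 [h2 h3]]|[-> [h|h]]]]; split=> //; [left|right|right].
  + by split=> //; split=> // h; apply: h3.
  + by split=> //; right.
  + by split=> //; left.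
- move=> [[[i z] j]|] //= [_ [[_ [_ h]]|[_ [h|h]]]]; first exact: h.
  + lia.
  + lia.
Qed.

Definition pv (i : 'I_n) (z : T) (q : nat) : VB := Some (i, z, inord q).

Lemma adj_path i z q w : 0 < q -> q < L -> adjB (pv i z q) w ->
  w = pv i z q.-1 \/ w = (if q == k.+1 then None else pv i z q.+1).
Proof.
move=> q0 qL; case: w => [[[i' z'] j]|] /=; rewrite inordK //; last first.
  by move=> ->; right; rewrite eqxx.
move=> [<- [[q0' _]|[<- [h|h]]]].
- by rewrite q0' in q0.
- right; have -> : (q == k.+1) = false.
    by apply/negbTE; apply/eqP => qk; move: (ltn_ord j); rewrite -h qk ltnn.
  have := ltn_ord j => hj; rewrite /pv; congr (Some (_, _, _)); apply: val_inj => /=.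
  rewrite inordK; lia.
- have := ltn_ord j => hj; left; rewrite /pv; congr (Some (_, _, _)); apply: val_inj => /=.
  rewrite inordK; lia.
Qed.

Section Copy.
Variables (W : VB -> Prop) (F : VB -> VB -> Prop) (f : T -> VB).
Hypothesis H1 : forall u v, F u v -> [/\ adjB u v, W u & W v].
Hypothesis fi : injective f.
Hypothesis fW : forall v, W v <-> exists x, f x = v.
Hypothesis fe : forall x y, e x y <-> F (f x) (f y).

Definition Img := [set f x | x in T].

Lemma cImg : #|Img| = k.
Proof. by rewrite card_imset. Qed.

Lemma nbr2 u a b : u \in Img -> (forall w, adjB u w -> w = a \/ w = b) ->
  a \in Img /\ b \in Img.
Proof.
move=> /imsetP [x _ ->] Hab.
have [y1 [y2 [y12 e1 e2]]] := edeg x.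
have a1 : adjB (f x) (f y1) by case: (H1 (proj1 (fe x y1) e1)).
have a2 : adjB (f x) (f y2) by case: (H1 (proj1 (fe x y2) e2)).
have i1 : f y1 \in Img by apply: imset_f.
have i2 : f y2 \in Img by apply: imset_f.
case: (Hab _ a1) => h1; case: (Hab _ a2) => h2; rewrite -?h1 -?h2; try by split.
- by case: y12; apply: fi; rewrite h1 h2.
- by case: y12; apply: fi; rewrite h1 h2.
Qed.

Lemma path_up i z q : 0 < q -> q.+1 < L -> pv i z q \in Img -> pv i z q.+1 \in Img.
Proof.
move=> q0 qL hI.
have [_] := nbr2 hI (fun w => @adj_path i z q w q0 (ltnW qL)).
have -> // : (q == k.+1) = false.
by apply/negbTE; apply/eqP => qk; move: qL; rewrite qk ltnn.
Qed.

Lemma path_down i z q : 0 < q -> q.+1 < L -> pv i z q.+1 \in Img -> pv i z q \in Img.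
Proof.
move=> q0 qL hI.
by have [] := nbr2 hI (fun w => @adj_path i z q.+1 w (ltn0Sn q) qL).
Qed.

Lemma path_all i z q : 0 < q -> q < L -> pv i z q \in Img ->
  forall r, 0 < r -> r < L -> pv i z r \in Img.
Proof.
move=> q0 qL hI r r0 rL.
case: (leqP q r) => hqr.
- have : forall d, q + d < L -> pv i z (q + d) \in Img.
    elim=> [|d IH] hd; first by rewrite addn0.
    rewrite addnS; apply: path_up; [lia|lia|apply: IH; lia].
  by move=> /(_ (r - q)); rewrite subnKC //; apply.
- have : forall d, d < q -> pv i z (q - d) \in Img.
    elim=> [|d IH] hd; first by rewrite subn0.
    have h1 : q - d = (q - d.+1).+1 by lia.
    apply: path_down; [lia|lia|rewrite -h1; apply: IH; lia].
  move=> /(_ (q - r)); rewrite subKn ?(ltnW hqr) //; apply; lia.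
Qed.

Lemma no_path i z q : 0 < q -> q < L -> pv i z q \notin Img.
Proof.
move=> q0 qL; apply/negP => hI.
suff : k.+1 <= k by rewrite ltnn.
rewrite -{2}cImg cardE -{1}(size_iota 1 k.+1) -(size_map (pv i z)).
apply: uniq_leq_size.
- rewrite map_inj_in_uniq ?iota_uniq // => r r'.
  rewrite !mem_iota => /andP [h1 h2] /andP [h3 h4] [] /(congr1 val) /=.
  rewrite inordK ?inordK; rewrite /k in h2 h4 *; lia.
- move=> w /mapP [r]; rewrite mem_iota => /andP [r0 rL] ->.
  rewrite mem_enum; apply: (path_all q0 qL hI); rewrite /k in rL *; lia.
Qed.

Lemma level0 x : exists i z, f x = Some (i, z, ord0).
Proof.
case hx : (f x) => [[[i z] j]|].
- case: (posnP j) => hj.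
    by exists i, z; congr (Some (_,_,_)); apply: val_inj.
  have : pv i z j \notin Img by apply: no_path.
  by rewrite /pv inord_val -hx imset_f.
- have [y1 [y2 [_ e1 _]]] := edeg x.
  have := proj1 (fe x y1) e1 => /H1 [].
  rewrite hx; case hy : (f y1) => [[[i z] j]|] //= hj _ _.
  have : pv i z j \notin Img by apply: no_path; rewrite hj.
  by rewrite /pv inord_val -hy imset_f.
Qed.

Lemma copyB (x0 : T) : exists i, forall v, W v <-> exists x, Some (i, x, ord0) = v.
Proof.
have [i0 [z0 h0]] := level0 x0.
have hs : forall x, exists z, f x = Some (i0, z, ord0).
  move=> x; have [i [z hx]] := level0 x; exists z.
  have : omap (fun p => p.1.1) (f x0) = omap (fun p => p.1.1) (f x).
    apply: (@crt_ind_f _ _ _ (fun y => omap (fun p => p.1.1) (f y))) (econn x0 x).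
    move=> a b /fe /H1 [hab _ _].
    have [ia [za ha]] := level0 a; have [ib [zb hb]] := level0 b.
    by move: hab; rewrite ha hb /= => -[->].
  by rewrite h0 hx /= => -[->].
exists i0 => v; rewrite fW; split.
- by move=> [x <-]; have [z ->] := hs x; exists z.
- move=> [x <-]; apply: (@block_surj T _ f (fun x => Some (i0, x, ord0))) => //.
  by move=> a b [].
Qed.
End Copy.

Definition sB (i : 'I_n) (x y : T) (u : VB) : VB :=
  match u with Some p => Some (p.1.1, swp i x y p.1.1 p.1.2, p.2) | None => None end.

Lemma sB_inv i x y : involutive (sB i x y).
Proof. by case=> [[[j z] q]|] //=; rewrite swp_inv. Qed.

Lemma sB_aut i x y : automorphism adjB (sB i x y).
Proof.
split; first by exists (sB i x y) => u; rewrite sB_inv.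
move=> [[[j z] q]|] [[[j' z'] q']|] //=; split.
- move=> [<- [[h1 [h2 h3]]|[<- h]]]; split=> //; [left|right] => //.
  by split=> //; split=> // /swp_inj.
- move=> [<- [[h1 [h2 h3]]|[h h']]]; split=> //; [left|right] => //.
  + by split=> //; split=> // hz; apply: h3; rewrite hz.
  + by split=> //; apply: swp_inj h.
Qed.

Lemma adjB_conn : n > 0 -> connected adjB.
Proof.
move=> n0; split; first by exists None.
have sym : forall u v, clos_refl_trans VB adjB u v -> clos_refl_trans VB adjB v u.
  move=> u v; elim=> [a b h|a|a b c _ h1 _ h2].
  - by apply: rt_step; case: adjB_graph => /(_ a b h).
  - exact: rt_refl.
  - exact: rt_trans h2 h1.
have toN : forall u, clos_refl_trans VB adjB u None.
  have H : forall d i z q, q + d = k.+1 -> clos_refl_trans VB adjB (pv i z q) None.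
    elim=> [|d IH] i z q hq.
    - by apply: rt_step; rewrite /= inordK; rewrite addn0 in hq; lia.
    - apply: rt_trans (IH i z q.+1 _); last by rewrite addSnnS.
      apply: rt_step; rewrite /= !inordK; try lia.
      by split=> //; right; split=> //; left.
  move=> [[[i z] q]|]; last exact: rt_refl.
  have := H (k.+1 - q) i z q; rewrite /pv inord_val; apply.
  by have := ltn_ord q; rewrite /k; lia.
by move=> u v; apply: rt_trans (toN u) (sym _ _ (toN v)).
Qed.

Lemma partB (x0 : T) : upsilon_v e adjB n /\ upsilon_v_sym e adjB (#|T| * n).
Proof.
apply: (@frame T e _ adjB n (fun i x => Some (i, x, ord0)) x0) => //.
- by move=> i j x y [-> ->].
- move=> i x y exy /=; split=> //; left; split=> //; split=> // xy.
  by subst; exact: (eirr exy).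
- move=> W F [H1 [H2 [f [fi fW fe]]]]; exact: (@copyB W F f H1 fi fW fe x0).
- move=> i x y; exists (sB i x y); split; first exact: sB_aut.
  by rewrite /= swp_val.
Qed.
End PartB.

Section PartC.
Variables (T : finType) (e : rel T) (n : nat).
Hypothesis esymm : forall x y, e x y -> e y x.
Hypothesis eirr : forall x, ~ e x x.
Hypothesis T1 : forall x y : T, x = y.

Definition adjC (u v : ('I_n * T)%type) : Prop := u <> v.

Lemma adjC_graph : is_graph adjC.
Proof. by split=> [u v h huv|v h] //; apply: h. Qed.

Lemma adjC_conn : n > 0 -> T -> connected adjC.
Proof.
move=> n0 x; split; first by exists (Ordinal n0, x).
move=> u v; case: (eqVneq u v) => [->|/eqP h]; [exact: rt_refl | exact: rt_step].
Qed.

Lemma partC (x0 : T) : upsilon_v e adjC n /\ upsilon_v_sym e adjC (#|T| * n).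
Proof.
apply: (@frame T e _ adjC n (fun i x => (i, x)) x0) => //.
- by move=> i j x y [-> ->].
- by move=> i x y exy; rewrite (T1 x y) in exy; case: (eirr exy).
- move=> W F [H1 [H2 [f [fi fW fe]]]]; exists (f x0).1 => v; rewrite fW; split.
  + move=> [z <-]; exists z; rewrite (T1 z x0); by case: (f x0) => a b; rewrite (T1 b x0).
  + move=> [z <-]; exists x0; rewrite (T1 z x0); by case: (f x0) => a b; rewrite (T1 b x0).
- move=> i x y; exists id; split; last by rewrite (T1 x y).
  by split=> //; exists id.
Qed.
End PartC.

Lemma conn_costly (T : finType) (e : rel T) :
  is_graph (fun x y : T => e x y) -> connected (fun x y : T => e x y) -> vertex_costly e.
Proof.
move=> [es ei] [[x0 _] ec] m.
exists ('I_m * T)%type, (@adjA T m), m.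
have [h1 h2] := @partA T e m es ei ec x0.
have k0 : 0 < #|T| by apply/card_gt0P; exists x0.
split=> //; first exact: adjA_graph.
by rewrite leq_pmull.
Qed.

Lemma deg2 (T : finType) (e : rel T) :
  is_graph (fun x y : T => e x y) -> connected (fun x y : T => e x y) ->
  no_hanging_edges e -> 1 < #|T| ->
  forall x, exists y1 y2, [/\ y1 <> y2, e x y1 & e x y2].
Proof.
move=> [es ei] [_ ec] nh T2 x.
have [y hy] : exists y, y != x.
  move/card_gt1P: T2 => [a [b [_ _ ab]]].
  case: (eqVneq a x) => [ax|ax]; last by exists a.
  by exists b; rewrite -ax eq_sym.
have [z ez] : exists z, e x z.
  have H := @clos_rt_rt1n _ _ _ _ (ec x y); inversion H; subst.
  - by rewrite eqxx in hy.
  - by eexists; eassumption.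
have d2 : 1 < degree e x.
  have d1 : 0 < degree e x by apply/card_gt0P; exists z; rewrite inE.
  case: (ltngtP (degree e x) 1) => //; first by rewrite ltnS leqn0 => /eqP d0; rewrite d0 in d1.
  by move=> d; case: nh; exists x, z; split=> //; left.
move/card_gt1P: d2 => [y1 [y2 [h1 h2 h12]]]; exists y1, y2.
by rewrite !inE in h1 h2; split=> //; apply/eqP.
Qed.

Lemma part2 (T : finType) (e : rel T) :
  is_graph (fun x y : T => e x y) -> connected (fun x y : T => e x y) ->
  no_hanging_edges e -> vertex_costly_in connected e.
Proof.
move=> G C nh m.
have [es ei] := G; have [[x0 _] ec] := C.
have k0 : 0 < #|T| by apply/card_gt0P; exists x0.
have mk : m <= #|T| * m.+1 by rewrite (leq_trans (leqnSn m)) // leq_pmull.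
case: (ltngtP #|T| 1) => hk.
- by rewrite ltnS leqn0 in hk; rewrite (eqP hk) in k0.
- have ed := deg2 G C nh hk.
  exists (option ('I_m.+1 * T * 'I_(#|T|.+2))), (@adjB T m.+1), m.+1.
  have [h1 h2] := @partB T e m.+1 es ei ec ed x0.
  split=> //; [exact: adjB_graph|exact: adjB_conn].
- have T1 : forall x y : T, x = y.
    have /card_le1_eqP H : #|T| <= 1 by rewrite hk.
    by move=> x y; apply: H.
  exists ('I_m.+1 * T)%type, (@adjC T m.+1), m.+1.
  have [h1 h2] := @partC T e m.+1 es ei T1 x0.
  split=> //; [exact: adjC_graph|exact: adjC_conn].
Qed.

Lemma ex_min (Q : nat -> Prop) : (exists n, Q n) -> exists n, Q n /\ forall m, Q m -> n <= m.
Proof.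
move=> [n Qn]; elim: n {-2}n (leqnn n) Qn => [|N IH] n hn Qn.
  by exists n; split=> // m _; move: hn; rewrite leqn0 => /eqP ->.
case: (lem (exists m, m < n /\ Q m)) => [[m [mn Qm]]|H].
- by apply: (IH m) => //; rewrite -ltnS (leq_trans mn).
- exists n; split=> // m Qm; rewrite leqNgt; apply/negP => mn; apply: H; by exists m.
Qed.

Section Fin.
Variable U : eqType.
Definition tr (P : (U -> Prop) -> Prop) (S : seq U) := forall W, P W -> exists v, W v /\ v \in S.

Lemma tr_cons P v S : tr (fun W => P W /\ ~ W v) S -> tr P (v :: S).
Proof.
move=> H W PW; case: (lem (W v)) => Wv; first by exists v; rewrite inE eqxx.
by have [x [Wx xS]] := H W (conj PW Wv); exists x; rewrite inE xS orbT.
Qed.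


Lemma fin_tr n : forall P : (U -> Prop) -> Prop,
  (forall W, P W -> exists l : seq U, forall v, W v -> v \in l) ->
  (forall S, tr P S -> n <= size S) ->
  exists Uf : seq U, forall S, tr P S -> size S <= n -> {subset S <= Uf}.
Proof.
elim: n => [|n IH] P Pfin Pmin.
  by exists [::] => -[|? ?] //.
have [W0 PW0] : exists W0, P W0.
  case: (lem (exists W0, P W0)) => // H; have : tr P [::] by move=> W PW; case: H; exists W.
  by move/Pmin.
have [l0 Hl0] := Pfin _ PW0.
have H : forall v, exists Uv : seq U, forall S, tr (fun W => P W /\ ~ W v) S ->
    size S <= n -> {subset S <= Uv}.
  move=> v; apply: IH.
  - by move=> W [PW _]; apply: Pfin.
  - by move=> S /tr_cons /Pmin.
have [Ul HUl] : exists Ul : seq U, forall v, v \in l0 -> forall S,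
    tr (fun W => P W /\ ~ W v) S -> size S <= n -> {subset S <= Ul}.
  elim: l0 {Hl0} => [|a l [Ul HUl]]; first by exists [::].
  have [Ua HUa] := H a; exists (Ua ++ Ul) => v; rewrite inE => /orP [/eqP ->|vl] S hS hs x xS.
  - by rewrite mem_cat (HUa S hS hs x xS).
  - by rewrite mem_cat (HUl v vl S hS hs x xS) orbT.
exists (l0 ++ Ul) => S hS hs x xS.
have [w [W0w wS]] := hS _ PW0.
have wl : w \in l0 by apply: Hl0.
case: (eqVneq x w) => [->|xw]; first by rewrite mem_cat wl.
rewrite mem_cat; apply/orP; right.
apply: (HUl w wl [seq y <- S | y != w]).
- move=> W [PW nWw]; have [y [Wy yS]] := hS W PW; exists y; split=> //.
  rewrite mem_filter yS andbT; apply/eqP => yw; apply: nWw; by rewrite -yw.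
- rewrite size_filter -ltnS (leq_trans _ hs) //.
  rewrite -[X in _ < X](count_predC (fun y => y != w) S) -addn1 leq_add2l.
  rewrite -has_count; apply/hasP; exists w => //=; by rewrite negbK.
- by rewrite mem_filter xw.
Qed.
End Fin.

Lemma card_cond (I : finType) (S : {pred I}) (p : pred I) :
  #|[set x in S | p x]| = \sum_(x in S) p x.
Proof.
rewrite -sum1_card big_mkcond [RHS]big_mkcond /=; apply: eq_bigr => x _.
by rewrite inE; case: (x \in S); case: (p x).
Qed.

Lemma copy_pull (T : finType) (e : rel T) V (adj : V -> V -> Prop) s g W F :
  automorphism adj s -> cancel s g -> cancel g s -> iso_subgraph e adj W F ->
  iso_subgraph e adj (fun v => W (s v)) (fun u v => F (s u) (s v)).
Proof.
move=> [_ Hs] sg gs [H1 [H2 [f [fi fW fe]]]].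
split; [|split].
- by move=> u v /H1 [a b c]; split => //; apply/Hs.
- by move=> u v /H2.
- exists (fun x => g (f x)); split.
  + by move=> x y /(can_inj gs) /fi.
  + move=> v; rewrite fW; split=> [[x fx]|[x <-]]; exists x; last by rewrite gs.
    by rewrite fx sg.
  + by move=> x y; rewrite !gs.
Qed.

Section Count.
Variables (T : finType) (e : rel T) (V : Type) (adj : V -> V -> Prop).
Local Notation U := (cl V).
Definition Pc (W : U -> Prop) := exists F, iso_subgraph e adj W F.

Lemma tr_aut s (S : seq U) : automorphism adj s -> tr Pc S -> tr Pc (map s S).
Proof.
move=> Hs HS W [F HW]; have [g [Hg [sg gs]]] := aut_inv Hs.
have [x [Wx xS]] := HS _ (ex_intro _ _ (copy_pull Hs sg gs HW)).
by exists (s x); split=> //; exact: (@map_f U U s S x xS).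
Qed.

Variable t0 : nat.
Hypothesis t0min : forall S : seq U, tr Pc S -> t0 <= size S.
Variable X0 : seq U.
Hypothesis X0tr : tr Pc X0.
Hypothesis X0sz : size X0 = t0.
Variable Uf : seq U.
Hypothesis Ufcov : forall S, tr Pc S -> size S <= t0 -> {subset S <= Uf}.

Definition inmin (v : U) := exists S, [/\ tr Pc S, size S = t0 & v \in S].
Definition Uf' := [seq v <- Uf | `[< inmin v >]].
Definition D := seq_sub Uf'.

Lemma inmin_Uf' v : inmin v -> v \in Uf'.
Proof.
move=> h; rewrite mem_filter; apply/andP; split; first exact/asboolP.
by case: h => S [hS hs vS]; apply: (Ufcov hS) => //; rewrite hs.
Qed.

Lemma Uf'_inmin v : v \in Uf' -> inmin v.
Proof. by rewrite mem_filter => /andP [/asboolP]. Qed.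

Definition TT : {set {set D}} :=
  [set A : {set D} | `[< tr Pc (map val (enum A)) >] && (#|A| <= t0)].

Lemma TT_card A : A \in TT -> #|A| = t0.
Proof.
rewrite inE => /andP [/asboolP h1 h2]; apply/eqP; rewrite eqn_leq h2 /=.
by have := t0min h1; rewrite size_map -cardE.
Qed.

Lemma TT_gt0 : 0 < #|TT|.
Proof.
apply/card_gt0P; exists [set d : D | val d \in X0]; rewrite inE; apply/andP; split.
- apply/asboolP => W PW; have [v [Wv vX]] := X0tr PW.
  have vU : v \in Uf' by apply: inmin_Uf'; exists X0.
  exists v; split => //; apply/mapP; exists (SeqSub vU) => //.
  by rewrite mem_enum inE.
- rewrite cardE -X0sz -(size_map val); apply: uniq_leq_size.
  + by rewrite map_inj_uniq ?enum_uniq //; exact: val_inj.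
  + by move=> v /mapP [d]; rewrite mem_enum inE => h ->.
Qed.

Definition c (d : D) := #|[set A in TT | d \in A]|.

Lemma dcount : \sum_(d : D) c d = t0 * #|TT|.
Proof.
rewrite /c; under eq_bigr => d _ do rewrite card_cond.
rewrite exchange_big /= mulnC -sum_nat_const.
apply: eq_bigr => A HA; rewrite -(TT_card HA) -sum1_card [RHS]big_mkcond /=.
by apply: eq_bigr => d _; case: (d \in A).
Qed.

Section Aut.
Variable s : V -> V.
Hypothesis Hs : automorphism adj s.

Lemma inmin_aut v : inmin v -> inmin (s v).
Proof.
move=> [S [h1 h2 h3]]; exists (map s S); split.
- exact: tr_aut.
- by rewrite size_map.
- exact: (@map_f U U s S v h3).
Qed.

Lemma sd_mem (d : D) : s (val d) \in Uf'.
Proof. by apply: inmin_Uf'; apply: inmin_aut; apply: Uf'_inmin; exact: ssvalP. Qed.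

Definition sd (d : D) : D := SeqSub (sd_mem d).

Lemma s_inj : injective s.
Proof. by case: Hs => -[g sg _] _; exact: can_inj sg. Qed.

Lemma sd_inj : injective sd.
Proof. by move=> d1 d2 /(congr1 val) /= /s_inj h; apply: val_inj. Qed.

Lemma TT_aut A : A \in TT -> sd @: A \in TT.
Proof.
move=> HA; have := HA; rewrite !inE => /andP [/asboolP h1 h2]; apply/andP; split.
- apply/asboolP => W [F HW]; have [g [Hg [sg gs]]] := aut_inv Hs.
  have [v [Wv vA]] := h1 _ (ex_intro _ _ (copy_pull Hs sg gs HW)).
  move: vA => /mapP [d]; rewrite mem_enum => dA vd.
  exists (s v); split => //; apply/mapP; exists (sd d); last by rewrite vd.
  by rewrite mem_enum; apply: imset_f.
- by rewrite card_imset //; exact: sd_inj.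
Qed.

Lemma c_aut d : c d <= c (sd d).
Proof.
rewrite /c -(card_imset _ (imset_inj sd_inj)); apply: subset_leq_card.
apply/subsetP => B /imsetP [A]; rewrite in_set => /andP [HA dA] ->.
by rewrite in_set (TT_aut HA) /=; apply: imset_f.
Qed.
End Aut.

Definition Yset := [set d | #|TT| <= #|T| * c d].
Definition Y : seq U := map val (enum Yset).

Lemma memY v : v \in Y <-> exists d, d \in Yset /\ val d = v.
Proof.
split; first by move=> /mapP [d]; rewrite mem_enum => h ->; exists d.
by move=> [d [h <-]]; apply/mapP; exists d; rewrite ?mem_enum.
Qed.

Lemma Y_aut1 s v : automorphism adj s -> v \in Y -> s v \in Y.
Proof.
move=> Hs /memY [d [hd <-]]; apply/memY; exists (sd Hs d); split => //.
move: hd; rewrite !inE => h; apply: (leq_trans h); rewrite leq_mul2l.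
by rewrite c_aut orbT.
Qed.

Lemma Y_inv : aut_invariant adj Y.
Proof.
move=> s Hs v; have [g [Hg [sg gs]]] := aut_inv Hs.
split=> /(@InE U) h; apply/(@InE U); first exact: Y_aut1.
by move: h => /(Y_aut1 Hg); rewrite sg.
Qed.

Lemma Y_uniq : uniq Y.
Proof. by rewrite map_inj_uniq ?enum_uniq //; exact: val_inj. Qed.

Lemma Y_size : size Y <= #|T| * t0.
Proof.
rewrite size_map -cardE -(leq_pmul2r TT_gt0) -mulnA -dcount big_distrr /=.
rewrite -sum_nat_const (@leq_trans (\sum_(d in Yset) #|T| * c d)) //.
  by apply: leq_sum => d; rewrite inE.
by rewrite big_mkcond /=; apply: leq_sum => d _; case: (d \in Yset).
Qed.

Lemma Y_tr : tr Pc Y.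
Proof.
move=> W [F [H1 [H2 [f [fi fW fe]]]]].
pose I := [set d : D | `[< W (val d) >]].
have cI : #|I| <= #|T|.
  rewrite cardE cardT -(size_map val) -(size_map f (enum T)).
  apply: uniq_leq_size; first by rewrite map_inj_uniq ?enum_uniq //; exact: val_inj.
  move=> v /mapP [d]; rewrite mem_enum inE => /asboolP /fW [x hx] ->.
  by rewrite -hx; apply: (@map_f T U f); rewrite mem_enum.
have hTT : #|TT| <= \sum_(d in I) c d.
  rewrite /c; under eq_bigr do rewrite card_cond.
  rewrite exchange_big /= -sum1_card; apply: leq_sum => A HA.
  have := HA; rewrite inE => /andP [/asboolP h1 _].
  have [v [Wv /mapP [d]]] := h1 W (ex_intro _ F (conj H1 (conj H2 (ex_intro _ f (And3 fi fW fe))))).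
  rewrite mem_enum => dA vd.
  have dI : d \in I by rewrite inE; apply/asboolP; rewrite -vd.
  by rewrite (bigD1 d) //= dA.
case: (lem (exists d, d \in I /\ d \in Yset)) => [[d [dI dY]]|H].
  exists (val d); split; first by move: dI; rewrite inE => /asboolP.
  by apply/memY; exists d.
exfalso.
have h1 : \sum_(d in I) (#|T| * c d + 1) <= #|I| * #|TT|.
  rewrite -sum_nat_const; apply: leq_sum => d dI; rewrite addn1 ltnNge; apply/negP => h.
  by apply: H; exists d; split=> //; rewrite inE.
rewrite big_split /= sum1_card -big_distrr /= in h1.
have h3 : #|T| * #|TT| <= #|T| * \sum_(d in I) c d by rewrite leq_mul2l hTT orbT.
have h4 : #|I| * #|TT| <= #|T| * #|TT| by rewrite leq_mul2r cI orbT.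
have := leq_trans h1 (leq_trans h4 h3); rewrite -{2}[_ * \sum_(d in I) c d]addn0 leq_add2l leqn0 => /eqP I0.
move: hTT; rewrite (eq_bigl (fun _ => false)) ?big_pred0 //.
  by rewrite leqn0 => /eqP h; move: TT_gt0; rewrite h.
move=> d; apply/negbTE/negP => dI; have : 0 < #|I| by apply/card_gt0P; exists d.
by rewrite I0.
Qed.
End Count.

Lemma rep_tr (T : finType) (e : rel T) V (adj : V -> V -> Prop) (X : seq (cl V)) :
  represents e adj X <-> tr (Pc e adj) X.
Proof.
split.
- move=> H W [F HW]; have [v [Wv /(@InE (cl V)) vX]] := H W F HW; by exists v.
- move=> H W F HW; have [v [Wv vX]] := H W (ex_intro _ F HW); exists v; split=> //.
  exact/(@InE (cl V)).
Qed.

Lemma gen_bound (T : finType) (e : rel T) V (adj : V -> V -> Prop) t :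
  (exists X : seq V, represents e adj X /\ size X <= t) ->
  exists Y : seq V, [/\ List.NoDup Y, represents e adj Y, aut_invariant adj Y
     & size Y <= #|T| * t].
Proof.
move=> [X [HX Xt]].
have [t0 [[S0 [S0tr S0sz]] t0min]] := @ex_min (fun n => exists S : seq (cl V),
   tr (Pc e adj) S /\ size S = n) (ex_intro _ _ (ex_intro _ X (conj (proj1 (rep_tr _ _ _) HX) erefl))).
have t0min' : forall S : seq (cl V), tr (Pc e adj) S -> t0 <= size S.
  by move=> S hS; apply: t0min; exists S.
have Pfin : forall W, Pc e adj W -> exists l : seq (cl V), forall v, W v -> v \in l.
  move=> W [F [_ [_ [f [_ fW _]]]]]; exists (map f (enum T)) => v /fW [x <-].
  by apply: (@map_f T (cl V) f); rewrite mem_enum.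
have [Uf HUf] := @fin_tr (cl V) t0 (Pc e adj) Pfin t0min'.
exists (Y e adj t0 Uf); split.
- apply/(@NoDupE (cl V)); exact: Y_uniq.
- apply/rep_tr; exact: (Y_tr S0tr S0sz HUf).
- exact: (Y_inv HUf).
- apply: (leq_trans (Y_size t0min' S0tr S0sz HUf)); rewrite leq_mul2l (leq_trans _ Xt) ?orbT //.
  by apply: t0min'; apply/rep_tr.
Qed.

Section Split.
Variables (T : finType) (e : rel T) (V : Type) (adj : V -> V -> Prop).
Hypothesis esymm : forall x y, e x y -> e y x.

Definition subrel (P : pred T) : rel {x : T | P x} := fun a b => e (val a) (val b).
Arguments subrel : clear implicits.

Lemma restrict (P : pred T) W F : iso_subgraph e adj W F ->
  exists W' F', iso_subgraph (subrel P) adj W' F' /\ forall v, W' v -> W v.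
Proof.
move=> [H1 [H2 [f [fi fW fe]]]].
exists (fun v => exists a : {x : T | P x}, f (val a) = v).
exists (fun u v => exists a b : {x : T | P x}, [/\ f (val a) = u, f (val b) = v & e (val a) (val b)]).
split; last by move=> v [a <-]; apply/fW; exists (val a).
split; [|split].
- move=> u v [a [b [<- <- hab]]]; split; [|by exists a|by exists b].
  by case: (H1 _ _ (proj1 (fe _ _) hab)).
- move=> u v [a [b [<- <- hab]]]; exists b, a; split=> //; exact: esymm.
- exists (fun a => f (val a)); split.
  + by move=> a b /fi /val_inj.
  + by [].
  + move=> a b; split; first by move=> h; exists a, b.
    by move=> [a' [b' [/fi /val_inj -> /fi /val_inj -> h]]].
Qed.

Lemma restrict_rep (P : pred T) (Y : seq V) :
  represents (subrel P) adj Y -> represents e adj Y.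
Proof.
move=> HY W F HW; have [W' [F' [H' sub]]] := restrict P HW.
by have [v [Wv vY]] := HY _ _ H'; exists v; split => //; apply: sub.
Qed.

Variable C : pred T.
Hypothesis cross : forall x y, e x y -> C x = C y.
Local Notation K1 := {x : T | C x}.
Local Notation K2 := {x : T | ~~ C x}.

Section Comb.
Variables (W1 W2 : V -> Prop) (F1 F2 : V -> V -> Prop) (a0 : K1).
Hypothesis I1 : iso_subgraph (subrel C) adj W1 F1.
Hypothesis I2 : iso_subgraph (subrel (fun x => ~~ C x)) adj W2 F2.
Hypothesis disj : forall v, W1 v -> W2 v -> False.

Lemma comb : iso_subgraph e adj (fun v => W1 v \/ W2 v) (fun u v => F1 u v \/ F2 u v).
Proof.
case: I1 => [A1 [B1 [f1 [fi1 fW1 fe1]]]].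
case: I2 => [A2 [B2 [f2 [fi2 fW2 fe2]]]].
pose f x := oapp f1 (oapp f2 (f1 a0) (insub x)) (insub x).
have cls : forall x, (exists a : K1, val a = x /\ f x = f1 a) \/
                     (exists b : K2, val b = x /\ f x = f2 b).
  move=> x; case hx : (C x).
  - left; exists (Sub x hx); split=> //; rewrite /f.
    by have -> : (insub x : option K1) = Some (Sub x hx) by apply: insubT.
  - have hx' : ~~ C x by rewrite hx.
    right; exists (Sub x hx'); split=> //; rewrite /f.
    have -> : (insub x : option K1) = None by apply: insubF.
    by have -> : (insub x : option K2) = Some (Sub x hx') by apply: insubT.
have W1f : forall a, W1 (f1 a) by move=> a; apply/fW1; exists a.
have W2f : forall b, W2 (f2 b) by move=> b; apply/fW2; exists b.
split; [|split].
- move=> u v [/A1 [? ? ?]|/A2 [? ? ?]]; split; by [left|right|].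
- by move=> u v [/B1|/B2]; [left|right].
- exists f; split.
  + move=> x y; case: (cls x) => [[a [<- ->]]|[b [<- ->]]];
      case: (cls y) => [[a' [<- ->]]|[b' [<- ->]]].
    * by move/fi1 => ->.
    * by move=> h; case: (disj (W1f a)); rewrite h.
    * by move=> h; case: (disj (W1f a')); rewrite -h.
    * by move/fi2 => ->.
  + move=> v; split.
    * move=> [/fW1 [a <-]|/fW2 [b <-]].
        by exists (val a); case: (cls (val a)) => [[a' [/val_inj <- ->]]|[b [hb _]]];
          [|move: (valP a) (valP b); rewrite hb => ->].
      by exists (val b); case: (cls (val b)) => [[a [ha _]]|[b' [/val_inj <- ->]]];
          [move: (valP a) (valP b); rewrite ha => ->|].
    * move=> [x <-]; case: (cls x) => [[a [_ ->]]|[b [_ ->]]]; by [left|right].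
  + move=> x y; case: (cls x) => [[a [<- ->]]|[b [<- ->]]];
      case: (cls y) => [[a' [<- ->]]|[b' [<- ->]]].
    * rewrite (fe1 a a'); split; first by left.
      by case=> // /A2 [_ h _]; case: (disj (W1f a) h).
    * split.
        by move=> /cross; move: (valP a) (valP b'); rewrite /= => -> /negbTE ->.
      by case=> [/A1 [_ _ h]|/A2 [_ h _]]; [case: (disj h (W2f b'))|case: (disj (W1f a) h)].
    * split.
        by move=> /cross; move: (valP b) (valP a'); rewrite /= => /negbTE -> ->.
      by case=> [/A1 [_ h _]|/A2 [_ _ h]]; [case: (disj h (W2f b))|case: (disj (W1f a') h)].
    * rewrite (fe2 b b'); split; first by right.
      by case=> // /A1 [_ h _]; case: (disj h (W2f b)).
Qed.
End Comb.
End Split.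

Lemma conn_crt (T : finType) (e : rel T) x y :
  connect e x y -> clos_refl_trans T (fun a b => e a b) x y.
Proof.
move=> /connectP [p]; elim: p x => [|z p IH] x /=; first by move=> _ ->; exact: rt_refl.
by move=> /andP [exz hp] hy; apply: rt_trans (rt_step _ _ _ _ exz) (IH z hp hy).
Qed.

Lemma In_catl (A : Type) (x : A) s1 s2 : List.In x s1 -> List.In x (s1 ++ s2).
Proof. by elim: s1 => //= y s IH [->|/IH]; [left|right]. Qed.

Lemma In_catr (A : Type) (x : A) s1 s2 : List.In x s2 -> List.In x (s1 ++ s2).
Proof. by elim: s1 => //= y s IH /IH; right. Qed.

Lemma In_map_seq (A B : Type) (f : A -> B) x s : List.In x s -> List.In (f x) (map f s).
Proof. by elim: s => //= y s IH [->|/IH]; [left|right]. Qed.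

Lemma costly_conn (T : finType) (e : rel T) :
  is_graph (fun x y : T => e x y) -> vertex_costly e -> connected (fun x y : T => e x y).
Proof.
move=> [es ei] Hc.
case: (lem (connected (fun x y : T => e x y))) => // nC; exfalso.
case: (posnP #|T|) => [k0|kpos].
  have [V [adj [u [_ _ _ _ hm]]]] := Hc 1; by rewrite k0 in hm.
have [x0 _] : exists x0 : T, True by move/card_gt0P: kpos => [x _]; exists x.
have [u [v nuv]] : exists u v, ~ clos_refl_trans T (fun a b => e a b) u v.
  case: (lem (exists u v, ~ clos_refl_trans T (fun a b => e a b) u v)) => // H.
  case: nC; split; first by exists x0.
  move=> a b; case: (lem (clos_refl_trans T (fun a b => e a b) a b)) => // h.
  by case: H; exists a, b.
pose C : pred T := fun y => connect e u y.
have cross : forall x y, e x y -> C x = C y.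
  move=> x y exy; apply/idP/idP => h.
  - exact: connect_trans h (connect1 exy).
  - exact: connect_trans h (connect1 (es _ _ exy)).
pose k1 := #|{: {x : T | C x}}|.
pose k2 := #|{: {x : T | ~~ C x}}|.
have kk : k1 + k2 = #|T| by rewrite /k1 /k2 !card_sig -(cardC [pred x | C x]).
have uC : C u by apply: connect0.
have vC : ~~ C v by apply/negP => /conn_crt.
have k1p : 0 < k1 by apply/card_gt0P; exists (Sub u uC).
have k2p : 0 < k2 by apply/card_gt0P; exists (Sub v vC).
have [V [adj [n [_ _ [[X [Xnd Xlen Xrep]] _] [_ symmin] hm]]]] := Hc (#|T| * #|T|.+1).
have nk : #|T|.+1 <= n by rewrite -(leq_pmul2l kpos).
have symle : forall Y : seq V, List.NoDup Y -> represents e adj Y -> aut_invariant adj Y ->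
    #|T| * n <= size Y.
  by move=> Y h1 h2 h3; rewrite -lengthE; apply: symmin; exists Y; split.
case: (lem (represents (@subrel T e (fun x => ~~ C x)) adj X)) => HX.
  have Xs : size X <= n by rewrite -lengthE Xlen.
  have HH := gen_bound (t := n) (ex_intro _ X (conj HX Xs)).
  have [Y [Ynd Yrep Yinv Ysz]] := HH.
  have := symle Y Ynd (restrict_rep es Yrep) Yinv.
  move=> h; have := leq_trans h Ysz; rewrite -kk -/k2.
  nia.
have [W2 [F2 [I2 nX]]] : exists W2 F2, iso_subgraph (@subrel T e (fun x => ~~ C x)) adj W2 F2
    /\ forall v, W2 v -> ~ List.In v X.
  case: (lem (exists W2 F2, iso_subgraph (@subrel T e (fun x => ~~ C x)) adj W2 F2
    /\ forall v, W2 v -> ~ List.In v X)) => // H; case: HX => W F HWF.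
  case: (lem (exists v, W v /\ List.In v X)) => // H'.
  case: H; exists W, F; split=> // w Ww Xw; apply: H'; by exists w.
have I2' := I2; case: I2' => [_ [_ [f2 [f2i f2W _]]]].
pose X' := X ++ map f2 (enum {: {x : T | ~~ C x}}).
have HX' : represents (@subrel T e C) adj X'.
  move=> W1 F1 I1.
  case: (lem (exists v, W1 v /\ W2 v)) => [[w [W1w W2w]]|nd].
  - exists w; split=> //; apply: In_catr.
    have [b <-] := proj1 (f2W w) W2w; apply: In_map_seq.
    by apply/InE; rewrite mem_enum.
  - have disj : forall v, W1 v -> W2 v -> False by move=> w h1 h2; apply: nd; exists w.
    have [w [[W1w|W2w] Xw]] := Xrep _ _ (comb cross (Sub u uC) I1 I2 disj).
    + by exists w; split=> //; apply: In_catl.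
    + by case: (nX w W2w Xw).
have X's : size X' <= n + k2 by rewrite size_cat size_map -cardE -lengthE Xlen.
have [Y [Ynd Yrep Yinv Ysz]] := gen_bound (ex_intro _ X' (conj HX' X's)).
have := symle Y Ynd (restrict_rep es Yrep) Yinv.
move=> h; have := leq_trans h Ysz; rewrite -kk -/k1.
rewrite -kk in nk.
nia.
Qed.


Theorem theorem1 :
  (forall (T : finType) (e : rel T),
      is_graph (fun x y : T => e x y) ->
      (vertex_costly e <-> connected (fun x y : T => e x y))) /\
  (forall (T : finType) (e : rel T),
      is_graph (fun x y : T => e x y) ->
      connected (fun x y : T => e x y) ->
      no_hanging_edges e ->
      vertex_costly_in connected e).
Proof.
split.
- move=> T e G; split; [exact: costly_conn G | exact: conn_costly G].
- exact: part2.
Qed.
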